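(* Let $\xi:(\tau_{\min},\tau_{\max})\to\mathbb{R}^4$ be a worldline as described in the context, and let $x$ be an event in the future of $\xi$. (i) Suppose $\xi$ is bounded away from the past light-cone of $x$ with respect to a given inertial coordinate system. Then $\xi$ is bounded away from the past light-cone of $x$ with respect to every inertial coordinate system obtained from the given one by an orthochronous Lorentz transformation $\tilde x^a=\Lambda^a{}_b x^b$ with $\Lambda^0{}_0>0$. (ii) Suppose $\xi$ is bounded away from the past light-cone of this one event $x$. Then the future of $\xi$ is all of $\mathbb{R}^4$, and $\xi$ is bounded away from the past light-cone of every event $y\in\mathbb{R}^4$.
   Context: Minkowski spacetime is $\mathbb{R}^4$ with inertial coordinates $(x^0,x^1,x^2,x^3)$ and metric $\eta_{ab}=\mathrm{diag}(-1,1,1,1)$; units with $c=1$. A worldline is an inextendible, future-oriented, timelike $C^\infty$ curve $\xi(\tau)=(\xi^0(\tau),\dots,\xi^3(\tau))$, $\tau\in(\tau_{\min},\tau_{\max})$ with $\tau_{\min}\in\mathbb{R}\cup\{-\infty\}$, $\tau_{\max}\in\mathbb{R}\cup\{+\infty\}$, parametrized by proper time: $\eta_{ab}\dot\xi^a\dot\xi^b=-1$. An event $y$ is in the chronological past of $x$ if $x-y$ is timelike and future-pointing ($x^0>y^0$). The future of $\xi$ is the set of events that can be reached from a point of $\xi$ along a future-oriented timelike curve. For events $x,y$ with $y$ in the chronological past of $x$, $D(x-y)=\sqrt{-\eta_{ab}(x^a-y^a)(x^b-y^b)}$. For $x$ in the future of $\xi$, for $\zeta\in(0,\infty)$ let $\varpi(\zeta,x)$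 denote the unique $\tau$ with $\xi(\tau)$ in the chronological past of $x$ and $D(x-\xi(\tau))=\zeta$ (the map $\tau\mapsto D(x-\xi(\tau))$ is strictly decreasing along the part of the worldline in the chronological past of $x$, tending to $\infty$ as $\tau\to\tau_{\min}$). Write $x^a-\xi^a(\varpi(\zeta,x))=\zeta\big(\cosh\psi(\zeta,x)\,\delta^a_0+\sinh\psi(\zeta,x)\,\mu^\rho(\zeta,x)\,\delta^a_\rho\big)$ with a spatial unit vector $\mu$ (Euclidean norm $1$, $\rho=1,2,3$); thus $\cosh\psi(\zeta,x)=(x^0-\xi^0(\tau))/D(x-\xi(\tau))$ at $\tau=\varpi(\zeta,x)$. Definition: $\xi$ is bounded away from the past light-cone of $x$ (in the given inertial coordinates) if $\psi(\zeta,x)$ stays bounded as $\zeta\to\infty$; equivalently, there are $\delta>0$ and $\tau_1$ such that $(x^0-\xi^0(\tau))/D(x-\xi(\tau))<\delta$ for all $\tau_{\min}<\tau<\tau_1$. *)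

(* Defs.v *)
From Stdlib Require Import Reals Lra.
From Coquelicot Require Import Coquelicot.
Open Scope R_scope.

(* Events of Minkowski space R^4 are represented as functions nat -> R;
   only the components 0,1,2,3 are meaningful (0 = time coordinate). *)
Definition event := nat -> R.

Definition mink (u v : event) : R :=
  - (u 0%nat * v 0%nat) + u 1%nat * v 1%nat + u 2%nat * v 2%nat + u 3%nat * v 3%nat.

Definition evsub (x y : event) : event := fun a => x a - y a.

Definition evEq (x y : event) : Prop := forall a : nat, (a < 4)%nat -> x a = y a.

Definition timelike_future (v : event) : Prop := mink v v < 0 /\ 0 < v 0%nat.

Definition chron_past (y x : event) : Prop := timelike_future (evsub x y).

Definition Dist (x y : event) : R := sqrt (- mink (evsub x y) (evsub x y)).

Definition in_dom (tmin tmax : Rbar) (t : R) : Prop :=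
  Rbar_lt tmin (Finite t) /\ Rbar_lt (Finite t) tmax.

Definition comp (xi : R -> event) (a : nat) : R -> R := fun t => xi t a.

Definition vel (xi : R -> event) (t : R) : event := fun a => Derive (comp xi a) t.

Definition lower_end (tmin : Rbar) : (R -> Prop) -> Prop :=
  match tmin with
  | Finite a => at_right a
  | _ => Rbar_locally m_infty
  end.
Definition upper_end (tmax : Rbar) : (R -> Prop) -> Prop :=
  match tmax with
  | Finite b => at_left b
  | _ => Rbar_locally p_infty
  end.

Definition curve_converges (xi : R -> event) (F : (R -> Prop) -> Prop) (p : event) : Prop :=
  forall a : nat, (a < 4)%nat -> filterlim (comp xi a) F (locally (p a)).

Definition worldline (tmin tmax : Rbar) (xi : R -> event) : Prop :=
  tmin <> p_infty /\ tmax <> m_infty /\ Rbar_lt tmin tmax /\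
  (forall (a n : nat) (t : R), (a < 4)%nat -> in_dom tmin tmax t ->
     ex_derive (Derive_n (comp xi a) n) t) /\
  (forall t : R, in_dom tmin tmax t ->
     mink (vel xi t) (vel xi t) = -1 /\ 0 < vel xi t 0%nat) /\
  (* inextendible: no endpoint at either end *)
  (forall p : event, ~ curve_converges xi (lower_end tmin) p) /\
  (forall p : event, ~ curve_converges xi (upper_end tmax) p).

Definition ft_curve (gamma : R -> event) (p q : event) : Prop :=
  evEq (gamma 0) p /\ evEq (gamma 1) q /\
  (forall (a : nat) (s : R), (a < 4)%nat -> 0 <= s <= 1 -> ex_derive (comp gamma a) s) /\
  (forall s : R, 0 <= s <= 1 -> timelike_future (vel gamma s)).

Definition in_future (tmin tmax : Rbar) (xi : R -> event) (x : event) : Prop :=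
  exists t : R, in_dom tmin tmax t /\ exists gamma : R -> event, ft_curve gamma (xi t) x.

Definition bounded_away (tmin tmax : Rbar) (xi : R -> event) (x : event) : Prop :=
  exists delta tau1 : R, 0 < delta /\ in_dom tmin tmax tau1 /\
    forall tau : R, in_dom tmin tmax tau -> tau < tau1 ->
      chron_past (xi tau) x /\ (x 0%nat - xi tau 0%nat) / Dist x (xi tau) < delta.

Definition sum4 (f : nat -> R) : R := f 0%nat + f 1%nat + f 2%nat + f 3%nat.
Definition mat_apply (L : nat -> nat -> R) (x : event) : event :=
  fun a => sum4 (fun b => L a b * x b).

Definition eta (a b : nat) : R :=
  if Nat.eqb a b then (if Nat.eqb a 0 then -1 else 1) else 0.

Definition orthochronous_lorentz (L : nat -> nat -> R) : Prop :=
  (forall a b : nat, (a < 4)%nat -> (b < 4)%nat ->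
     sum4 (fun c => sum4 (fun d => eta c d * L c a * L d b)) = eta a b) /\
  0 < L 0%nat 0%nat.

(* Main.v *)
Require Import Defs.
From Stdlib Require Import Reals Lra Lia Classical FunctionalExtensionality.
From Coquelicot Require Import Coquelicot.
Open Scope R_scope.

Lemma incr_of_deriv (P : R -> Prop) (f df : R -> R) :
  (forall s t u, P s -> P u -> s <= t <= u -> P t) ->
  (forall t, P t -> is_derive f t (df t) /\ 0 < df t) ->
  forall s t, P s -> P t -> s < t -> f s < f t.
Proof.
  intros Hconv Hd s t Ps Pt Hst.
  destruct (MVT_gen f s t df) as [c [Hc He]].
  - intros y Hy. rewrite Rmin_left in Hy by lra. rewrite Rmax_right in Hy by lra.
    apply Hd. apply (Hconv s y t); auto; lra.
  - intros y Hy. rewrite Rmin_left in Hy by lra. rewrite Rmax_right in Hy by lra.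
    apply continuity_pt_filterlim. apply (@ex_derive_continuous R_AbsRing R_NormedModule).
    exists (df y). apply Hd. apply (Hconv s y t); auto; lra.
  - rewrite Rmin_left in Hc by lra. rewrite Rmax_right in Hc by lra.
    assert (0 < df c) by (apply Hd; apply (Hconv s c t); auto; lra).
    assert (0 < df c * (t - s)) by (apply Rmult_lt_0_compat; lra). lra.
Qed.

Definition lowlim (tmin : Rbar) (f : R -> R) (l : R) : Prop :=
  forall eps, 0 < eps -> exists t0 : R, Rbar_lt tmin t0 /\
    forall t : R, Rbar_lt tmin t -> t <= t0 -> Rabs (f t - l) < eps.

Lemma mono_lowlim (tmin : Rbar) (t1 : R) (f : R -> R) (m : R) : Rbar_lt tmin t1 ->
  (forall s t : R, Rbar_lt tmin s -> s <= t -> t <= t1 -> f s <= f t) ->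
  (forall t : R, Rbar_lt tmin t -> t <= t1 -> m <= f t) ->
  exists l, lowlim tmin f l.
Proof.
  intros H1 Hm Hb.
  set (E := fun y => exists t : R, Rbar_lt tmin t /\ t <= t1 /\ y = - f t).
  destruct (completeness E) as [L [HL1 HL2]].
  - exists (- m). intros y [t [Ht1 [Ht2 ->]]]. specialize (Hb t Ht1 Ht2). lra.
  - exists (- f t1). exists t1. repeat split; auto; lra.
  - exists (- L). intros eps Heps.
    destruct (classic (exists y, E y /\ L - eps < y)) as [[y [[t0 [Ht0 [Ht0' ->]]] Hy]] | Hn].
    + exists t0. split; auto. intros t Ht Htt.
      assert (f t <= f t0) by (apply Hm; [exact Ht | exact Htt | exact Ht0']).
      assert (- f t <= L) by (apply HL1; exists t; repeat split; auto; lra).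
      rewrite Rabs_right by lra. lra.
    + exfalso. assert (L <= L - eps); [|lra]. apply HL2.
      intros y Hy. destruct (Rle_or_lt y (L - eps)); auto. exfalso; apply Hn; eauto.
Qed.

Lemma lowlim_filterlim (tmin : Rbar) (f : R -> R) (l : R) : tmin <> p_infty -> lowlim tmin f l ->
  filterlim f (lower_end tmin) (locally l).
Proof.
  intros Hp Hl. destruct tmin as [a| |]; simpl.
  - apply (@filterlim_locally R R_UniformSpace (at_right a)). apply within_filter, locally_filter.
    intros eps. destruct (Hl eps (cond_pos eps)) as [t0 [Ht0 H]].
    simpl in Ht0. exists (mkposreal (t0 - a) ltac:(lra)). intros y Hy Hay.
    apply H. simpl; lra. change (Rabs (y - a) < t0 - a) in Hy.
    apply Rabs_lt_between in Hy. lra.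
  - congruence.
  - apply (@filterlim_locally R R_UniformSpace (Rbar_locally m_infty)). apply Rbar_locally_filter.
    intros eps. destruct (Hl eps (cond_pos eps)) as [t0 [Ht0 H]].
    exists t0. intros y Hy. apply H. simpl; auto. lra.
Qed.

Section WL.
Variables (tmin tmax : Rbar) (xi : R -> event).
Hypothesis W : worldline tmin tmax xi.

Lemma wl_deriv a t : (a < 4)%nat -> in_dom tmin tmax t ->
  is_derive (Defs.comp xi a) t (vel xi t a).
Proof.
  intros Ha Ht. destruct W as [_ [_ [_ [Hc _]]]].
  apply Derive_correct. exact (Hc a 0%nat t Ha Ht).
Qed.

Lemma wl_vel t : in_dom tmin tmax t ->
  0 < vel xi t 0%nat /\ Rabs (vel xi t 1%nat) < vel xi t 0%nat /\
  Rabs (vel xi t 2%nat) < vel xi t 0%nat /\ Rabs (vel xi t 3%nat) < vel xi t 0%nat.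
Proof.
  intros Ht. destruct W as [_ [_ [_ [_ [Hv _]]]]]. destruct (Hv t Ht) as [Hm H0].
  unfold mink in Hm.
  set (v0 := vel xi t 0%nat) in *. set (v1 := vel xi t 1%nat) in *.
  set (v2 := vel xi t 2%nat) in *. set (v3 := vel xi t 3%nat) in *.
  assert (forall w, w * w < v0 * v0 -> Rabs w < v0).
  { intros w Hw. apply Rabs_def1; nra. }
  repeat split; auto; apply H; nra.
Qed.

Lemma dom_conv : forall s t u, in_dom tmin tmax s -> in_dom tmin tmax u -> s <= t <= u ->
  in_dom tmin tmax t.
Proof.
  intros s t u [Hs1 Hs2] [Hu1 Hu2] Hst. split.
  - destruct tmin; simpl in *; auto; lra.
  - destruct tmax; simpl in *; auto; lra.
Qed.

Lemma incr_pm i sg : (0 < i < 4)%nat -> Rabs sg <= 1 ->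
  forall s t, in_dom tmin tmax s -> in_dom tmin tmax t -> s < t ->
  xi s 0%nat + sg * xi s i < xi t 0%nat + sg * xi t i.
Proof.
  intros Hi Hsg.
  apply (incr_of_deriv (in_dom tmin tmax) (fun t => xi t 0%nat + sg * xi t i)
     (fun t => vel xi t 0%nat + sg * vel xi t i)).
  - exact dom_conv.
  - intros t Ht. split.
    + apply (is_derive_plus (Defs.comp xi 0) (fun t => sg * Defs.comp xi i t)).
      * apply wl_deriv; auto.
      * apply is_derive_scal. apply wl_deriv; auto; lia.
    + destruct (wl_vel t Ht) as [H0 [H1 [H2 H3]]].
      assert (Rabs (vel xi t i) < vel xi t 0%nat).
      { destruct i as [|[|[|[|]]]]; try lia; auto. }
      assert (Rabs (sg * vel xi t i) < vel xi t 0%nat).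
      { rewrite Rabs_mult. 
        assert (Rabs sg * Rabs (vel xi t i) <= Rabs (vel xi t i)).
        { pose proof (Rabs_pos (vel xi t i)). nra. } lra. }
      apply Rabs_def2 in H4. lra.
Qed.

Lemma incr0 s t : in_dom tmin tmax s -> in_dom tmin tmax t -> s < t -> xi s 0%nat < xi t 0%nat.
Proof.
  intros. pose proof (incr_pm 1 0 ltac:(lia) ltac:(rewrite Rabs_R0; lra) s t H H0 H1). lra.
Qed.

End WL.

Lemma lowlim_ext (tmin : Rbar) (f g : R -> R) l : (forall t, f t = g t) -> lowlim tmin f l -> lowlim tmin g l.
Proof.
  intros He H eps Heps. destruct (H eps Heps) as [t0 [H1 H2]]. exists t0. split; auto.
  intros t Ht Htt. rewrite <- He. auto.
Qed.

Lemma lowlim_half (tmin : Rbar) (f g : R -> R) l k : lowlim tmin f l -> lowlim tmin g k ->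
  lowlim tmin (fun t => (f t - g t) / 2) ((l - k) / 2).
Proof.
  intros Hf Hg eps Heps. destruct (Hf eps Heps) as [t1 [H1 H2]].
  destruct (Hg eps Heps) as [t2 [H3 H4]]. exists (Rmin t1 t2). split.
  - apply Rmin_case; auto.
  - intros t Ht Htt. specialize (H2 t Ht (Rle_trans _ _ _ Htt (Rmin_l _ _))).
    specialize (H4 t Ht (Rle_trans _ _ _ Htt (Rmin_r _ _))).
    apply Rabs_def2 in H2. apply Rabs_def2 in H4. apply Rabs_def1; lra.
Qed.

Section WL2.
Variables (tmin tmax : Rbar) (xi : R -> event).
Hypothesis W : worldline tmin tmax xi.

Lemma dom_of (t1 t : R) : in_dom tmin tmax t1 -> Rbar_lt tmin t -> t <= t1 -> in_dom tmin tmax t.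
Proof.
  intros [_ H] H1 H2. split; auto. destruct tmax; simpl in *. lra. exact I. exact H.  
Qed.

Lemma unbounded (t1 : R) : in_dom tmin tmax t1 -> forall m,
  exists t, in_dom tmin tmax t /\ t <= t1 /\ xi t 0%nat < m.
Proof.
  intros Ht1 m. destruct (classic (exists t, in_dom tmin tmax t /\ t <= t1 /\ xi t 0%nat < m)) as [H|Hn]; auto.
  exfalso.
  assert (Hb : forall t, in_dom tmin tmax t -> t <= t1 -> m <= xi t 0%nat).
  { intros t Ht Htt. destruct (Rle_or_lt m (xi t 0%nat)); auto. exfalso; apply Hn; eauto. }
  set (g := fun sg (i : nat) t => xi t 0%nat + sg * xi t i).
  assert (Hgm : forall i sg, (0 < i < 4)%nat -> Rabs sg <= 1 -> forall s t,
     in_dom tmin tmax s -> in_dom tmin tmax t -> s <= t -> g sg i s <= g sg i t).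
  { intros i sg Hi Hsg s t Hs Ht Hst. destruct (Rle_lt_or_eq_dec s t Hst) as [Hl| ->]; [|lra].
    unfold g. apply Rlt_le. apply (incr_pm tmin tmax xi W); auto. }
  assert (Hl : forall i sg, (0 < i < 4)%nat -> Rabs sg <= 1 -> exists l, lowlim tmin (g sg i) l).
  { intros i sg Hi Hsg.
    apply (mono_lowlim tmin t1 (g sg i) (m - (Rabs (g 1 i t1 - m) + Rabs (g (-1) i t1 - m)))).
    - apply Ht1.
    - intros s t Hs Hst Htt. apply Hgm; auto. apply (dom_of t1); auto; lra.
      apply (dom_of t1); auto. destruct tmin; simpl in *; auto; lra.
    - intros t Ht Htt. assert (Hd : in_dom tmin tmax t) by (apply (dom_of t1); auto).
      assert (A1 : g 1 i t <= g 1 i t1) by (apply Hgm; [exact Hi | rewrite Rabs_R1; lra | exact Hd | exact Ht1 | exact Htt]).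
      assert (A2 : g (-1) i t <= g (-1) i t1) by (apply Hgm; [exact Hi | rewrite Rabs_left by lra; lra | exact Hd | exact Ht1 | exact Htt]).
      pose proof (Hb t Hd Htt) as A3.
      unfold g in *.
      assert (Rabs (xi t i) <= Rabs (g 1 i t1 - m) + Rabs (g (-1) i t1 - m)).
      { unfold g. apply Rabs_le. pose proof (Rle_abs (xi t1 0%nat + 1 * xi t1 i - m)).
        pose proof (Rle_abs (xi t1 0%nat + -1 * xi t1 i - m)).
        pose proof (Rabs_pos (xi t1 0%nat + 1 * xi t1 i - m)).
        pose proof (Rabs_pos (xi t1 0%nat + -1 * xi t1 i - m)). split; lra. }
      assert (Rabs (sg * xi t i) <= Rabs (xi t i)).
      { rewrite Rabs_mult. pose proof (Rabs_pos (xi t i)). nra. }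
      pose proof (Rle_abs (- (sg * xi t i))). rewrite Rabs_Ropp in H1. unfold g in H. lra. }
  destruct (Hl 1%nat 0 ltac:(lia) ltac:(rewrite Rabs_R0; lra)) as [l0 H0].
  destruct (Hl 1%nat 1 ltac:(lia) ltac:(rewrite Rabs_R1; lra)) as [lp1 Hp1].
  destruct (Hl 1%nat (-1) ltac:(lia) ltac:(rewrite Rabs_left by lra; lra)) as [lm1 Hm1].
  destruct (Hl 2%nat 1 ltac:(lia) ltac:(rewrite Rabs_R1; lra)) as [lp2 Hp2].
  destruct (Hl 2%nat (-1) ltac:(lia) ltac:(rewrite Rabs_left by lra; lra)) as [lm2 Hm2].
  destruct (Hl 3%nat 1 ltac:(lia) ltac:(rewrite Rabs_R1; lra)) as [lp3 Hp3].
  destruct (Hl 3%nat (-1) ltac:(lia) ltac:(rewrite Rabs_left by lra; lra)) as [lm3 Hm3].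
  destruct W as [Hp [_ [_ [_ [_ [Hlow _]]]]]].
  apply (Hlow (fun a => match a with 0%nat => l0 | 1%nat => (lp1 - lm1)/2
     | 2%nat => (lp2 - lm2)/2 | _ => (lp3 - lm3)/2 end)).
  intros a Ha. apply lowlim_filterlim; auto.
  destruct a as [|[|[|[|]]]]; try lia.
  - apply (lowlim_ext tmin (g 0 1%nat)); auto. intros t. unfold g, Defs.comp. ring.
  - apply (lowlim_ext tmin (fun t => (g 1 1%nat t - g (-1) 1%nat t)/2)).
    + intros t. unfold g, Defs.comp. field.
    + apply lowlim_half; auto.
  - apply (lowlim_ext tmin (fun t => (g 1 2%nat t - g (-1) 2%nat t)/2)).
    + intros t. unfold g, Defs.comp. field.
    + apply lowlim_half; auto.
  - apply (lowlim_ext tmin (fun t => (g 1 3%nat t - g (-1) 3%nat t)/2)).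
    + intros t. unfold g, Defs.comp. field.
    + apply lowlim_half; auto.
Qed.

End WL2.

Definition G (L : nat -> nat -> R) (a b : nat) : R :=
  sum4 (fun c => sum4 (fun d => eta c d * L c a * L d b)).

Lemma mink_L L : orthochronous_lorentz L -> forall v,
  mink (mat_apply L v) (mat_apply L v) = mink v v.
Proof.
  intros [H _] v.
  assert (HG : forall a b, (a < 4)%nat -> (b < 4)%nat -> G L a b = eta a b) by exact H.
  assert (E : mink (mat_apply L v) (mat_apply L v) =
     sum4 (fun a => sum4 (fun b => v a * v b * G L a b))).
  { unfold mink, mat_apply, G, sum4, eta. simpl. ring. }
  rewrite E. unfold sum4. rewrite !HG by lia. unfold eta, mink. simpl. ring.
Qed.

Lemma time_L L : orthochronous_lorentz L -> forall v, timelike_future v ->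
  0 < mat_apply L v 0%nat.
Proof.
  intros HL v [Hv0 Hv1].
  destruct (Rlt_or_le 0 (mat_apply L v 0%nat)) as [Hp|Hn]; auto. exfalso.
  destruct HL as [HL1 HL2].
  set (A := L 0%nat 0%nat) in *. set (B := mat_apply L v 0%nat) in *.
  set (s := A / (A - B)).
  assert (Hs0 : 0 < s) by (unfold s; apply Rdiv_lt_0_compat; lra).
  assert (Hs1 : s <= 1) by (unfold s, Rdiv; rewrite <- (Rinv_r (A - B)) by lra; apply Rmult_le_compat_r; [left; apply Rinv_0_lt_compat; lra | lra]).
  set (w := fun a : nat => (if Nat.eqb a 0 then 1 - s else 0) + s * v a).
  assert (Hw : mink w w < 0).
  { unfold mink, w; simpl. unfold mink in Hv0.
    assert (v 0%nat * v 0%nat > v 1%nat * v 1%nat + v 2%nat * v 2%nat + v 3%nat * v 3%nat) by lra.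
    assert (s * v 0%nat <= 1 - s + s * v 0%nat) by lra.
    assert (0 < s * v 0%nat) by nra.
    assert (s*s*(v 1%nat * v 1%nat + v 2%nat * v 2%nat + v 3%nat * v 3%nat) < (s * v 0%nat) * (s * v 0%nat)) by (replace ((s * v 0%nat) * (s * v 0%nat)) with (s*s*(v 0%nat * v 0%nat)) by ring; apply Rmult_lt_compat_l; nra).
    nra. }
  assert (Hw0 : mat_apply L w 0%nat = 0).
  { assert (mat_apply L w 0%nat = (1 - s) * A + s * B).
    { unfold mat_apply, w, sum4, A, B, mat_apply, sum4. simpl. ring. }
    rewrite H. unfold s. field. lra. }
  pose proof (mink_L L (conj HL1 HL2) w) as E. rewrite <- E in Hw.
  unfold mink in Hw. rewrite Hw0 in Hw. nra.
Qed.

Lemma bound_L L (v : event) : mink v v < 0 -> 0 < v 0%nat ->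
  mat_apply L v 0%nat <= (Rabs (L 0%nat 0%nat) + Rabs (L 0%nat 1%nat) + Rabs (L 0%nat 2%nat) + Rabs (L 0%nat 3%nat)) * v 0%nat.
Proof.
  intros Hm H0. unfold mink in Hm.
  assert (Hb : forall i, v i * v i < v 0%nat * v 0%nat -> forall c, c * v i <= Rabs c * v 0%nat).
  { intros i Hi c. assert (Rabs (v i) < v 0%nat) by (apply Rabs_def1; nra).
    rewrite <- (Rabs_right (v 0%nat)) by lra.
    apply Rle_trans with (Rabs (c * v i)). apply Rle_abs. rewrite Rabs_mult.
    apply Rmult_le_compat_l. apply Rabs_pos. rewrite (Rabs_right (v 0%nat)) by lra; lra. }
  unfold mat_apply, sum4.
  pose proof (Hb 1%nat ltac:(nra) (L 0%nat 1%nat)).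
  pose proof (Hb 2%nat ltac:(nra) (L 0%nat 2%nat)).
  pose proof (Hb 3%nat ltac:(nra) (L 0%nat 3%nat)).
  pose proof (Rle_abs (L 0%nat 0%nat)).
  nra.
Qed.

Lemma evsub_L L x y : evsub (mat_apply L x) (mat_apply L y) = mat_apply L (evsub x y).
Proof.
  apply functional_extensionality. intros a. unfold evsub, mat_apply, sum4. ring.
Qed.

Lemma abs_bt x a : Rabs x <= a -> -a <= x /\ x <= a.
Proof. unfold Rabs; destruct Rcase_abs; lra. Qed.

Lemma core (u w : event) (delta : R) :
  0 < delta -> mink u u < 0 -> 0 < u 0%nat ->
  u 0%nat / sqrt (- mink u u) < delta ->
  4 * (Rabs (w 0%nat) + Rabs (w 1%nat) + Rabs (w 2%nat) + Rabs (w 3%nat)) * delta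
   + 2 * Rabs (mink w w) + 2 + Rabs (w 0%nat) <= sqrt (- mink u u) ->
  let z := fun a => u a + w a in
  mink z z < 0 /\ 0 < z 0%nat /\
  z 0%nat / sqrt (- mink z z) < 2 * Rabs (w 0%nat) + 2 * delta + 1.
Proof.
  intros Hd Hm H0 Hr HR z.
  set (D := sqrt (- mink u u)) in *.
  assert (HD0 : 0 < D) by (apply sqrt_lt_R0; lra).
  assert (HD2 : D * D = - mink u u) by (apply sqrt_sqrt; lra).
  assert (Hud : u 0%nat < delta * D).
  { apply (Rmult_lt_compat_r D) in Hr; auto. unfold Rdiv in Hr.
    rewrite Rmult_assoc, Rinv_l in Hr by lra. lra. }
  assert (HDu : D <= u 0%nat).
  { unfold mink in HD2. nra. }
  unfold mink in Hm.
  assert (Hb : forall i, u i * u i <= u 0%nat * u 0%nat -> forall c, Rabs (c * u i) <= Rabs c * u 0%nat).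
  { intros i Hi c. rewrite Rabs_mult. apply Rmult_le_compat_l. apply Rabs_pos.
    apply Rsqr_le_abs_0 in Hi. rewrite (Rabs_right (u 0%nat)) in Hi by lra. exact Hi. }
  set (Wn := Rabs (w 0%nat) + Rabs (w 1%nat) + Rabs (w 2%nat) + Rabs (w 3%nat)) in *.
  assert (Hwu : Rabs (mink w u) <= Wn * u 0%nat).
  { unfold mink.
    pose proof (Hb 0%nat ltac:(lra) (w 0%nat)).
    pose proof (Hb 1%nat ltac:(nra) (w 1%nat)).
    pose proof (Hb 2%nat ltac:(nra) (w 2%nat)).
    pose proof (Hb 3%nat ltac:(nra) (w 3%nat)).
    apply abs_bt in H. apply abs_bt in H1. apply abs_bt in H2. apply abs_bt in H3.
    apply Rabs_le.
    unfold Wn. lra. }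
  assert (Ez : mink z z = mink u u + 2 * mink w u + mink w w) by (unfold z, mink; ring).
  assert (HW0 : 0 <= Wn) by (unfold Wn; pose proof (Rabs_pos (w 0%nat)); pose proof (Rabs_pos (w 1%nat));
     pose proof (Rabs_pos (w 2%nat)); pose proof (Rabs_pos (w 3%nat)); lra).
  pose proof (Rle_abs (mink w u)). pose proof (Rle_abs (mink w w)).
  pose proof (Rabs_pos (mink w w)). pose proof (Rabs_pos (w 0%nat)).
  assert (Hmz : mink z z <= - (D * D) / 2 - 1).
  { assert (0 <= 4 * Wn * delta) by (apply Rmult_le_pos; lra). rewrite Ez.
    assert (2 * mink w u <= 2 * Wn * delta * D).
    { assert (Wn * u 0%nat <= Wn * (delta * D)) by (apply Rmult_le_compat_l; lra). nra. }
    assert (D * (4 * Wn * delta + 2 * Rabs (mink w w) + 2) <= D * D) by (apply Rmult_le_compat_l; lra).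
    assert (1 <= D) by lra.
    assert (Rabs (mink w w) + 1 <= D * (Rabs (mink w w) + 1)) by nra.
    lra. }
  assert (0 <= D * D) by nra. split; [lra|]. split.
  { unfold z. pose proof (Rle_abs (- w 0%nat)) as Hq. rewrite Rabs_Ropp in Hq. assert (0 <= 4 * Wn * delta) by (apply Rmult_le_pos; lra). lra. }
  set (Dz := sqrt (- mink z z)).
  assert (HDz : D / 2 <= Dz).
  { unfold Dz. rewrite <- (sqrt_square (D/2)) by lra. apply sqrt_le_1_alt. nra. }
  assert (Hz0 : z 0%nat <= Rabs (w 0%nat) + delta * D) by (unfold z; pose proof (Rle_abs (w 0%nat)); lra).
  assert (HDz0 : 0 < Dz) by lra.
  apply (Rmult_lt_reg_r Dz); auto. unfold Rdiv. rewrite Rmult_assoc, Rinv_l by lra. rewrite Rmult_1_r.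
  assert ((2 * Rabs (w 0%nat) + 2 * delta + 1) * (D / 2) <= (2 * Rabs (w 0%nat) + 2 * delta + 1) * Dz)
    by (apply Rmult_le_compat_l; lra).
  assert (1 <= D) by (assert (0 <= 4 * Wn * delta) by (apply Rmult_le_pos; lra); lra).
  assert (Rabs (w 0%nat) <= Rabs (w 0%nat) * D) by (rewrite <- (Rmult_1_r (Rabs (w 0%nat))) at 1; apply Rmult_le_compat_l; lra).
  nra.
Qed.

Lemma exists_below (tmin : Rbar) (t : R) : Rbar_lt tmin t -> exists s : R, Rbar_lt tmin s /\ s < t.
Proof.
  intros H. destruct tmin as [a| |]; simpl in *.
  - exists ((a + t) / 2). split; lra.
  - contradiction.
  - exists (t - 1). split; auto; lra.
Qed.

Theorem proposition1 (tmin tmax : Rbar) (xi : R -> event) (x : event) :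
  worldline tmin tmax xi -> in_future tmin tmax xi x ->
  (* (i) *)
  (bounded_away tmin tmax xi x ->
     forall L : nat -> nat -> R, orthochronous_lorentz L ->
       bounded_away tmin tmax (fun t => mat_apply L (xi t)) (mat_apply L x)) /\
  (* (ii) *)
  (bounded_away tmin tmax xi x ->
     (forall y : event, in_future tmin tmax xi y) /\
     (forall y : event, bounded_away tmin tmax xi y)).
Proof.
  intros W Hfut. split.
  - intros [delta [tau1 [Hd [Ht1 H]]]] L HL.
    set (K := Rabs (L 0%nat 0%nat) + Rabs (L 0%nat 1%nat) + Rabs (L 0%nat 2%nat) + Rabs (L 0%nat 3%nat)).
    assert (HK : 0 < K).
    { destruct HL as [_ HL0]. unfold K. pose proof (Rabs_pos_lt (L 0%nat 0%nat) ltac:(lra)).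
      pose proof (Rabs_pos (L 0%nat 1%nat)). pose proof (Rabs_pos (L 0%nat 2%nat)).
      pose proof (Rabs_pos (L 0%nat 3%nat)). lra. }
    exists (K * delta), tau1. split; [apply Rmult_lt_0_compat; lra|]. split; [exact Ht1|].
    intros tau Hdom Hlt. destruct (H tau Hdom Hlt) as [[Hm H0] Hr].
    unfold chron_past. cbv beta. rewrite evsub_L.
    assert (Hu : timelike_future (evsub x (xi tau))) by (split; auto).
    split. { split. rewrite mink_L by auto; exact Hm. apply time_L; auto. }
    unfold Dist. rewrite evsub_L, mink_L by auto.
    change (mat_apply L x 0%nat - mat_apply L (xi tau) 0%nat) with
      (evsub (mat_apply L x) (mat_apply L (xi tau)) 0%nat). rewrite evsub_L.
    unfold Dist in Hr. change (x 0%nat - xi tau 0%nat) with (evsub x (xi tau) 0%nat) in Hr.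
    set (u := evsub x (xi tau)) in *.
    assert (HD : 0 < sqrt (- mink u u)) by (apply sqrt_lt_R0; lra).
    pose proof (bound_L L u Hm H0) as Hb. fold K in Hb.
    apply Rle_lt_trans with (K * (u 0%nat / sqrt (- mink u u))).
    + unfold Rdiv. rewrite <- Rmult_assoc. apply Rmult_le_compat_r; auto.
      left; apply Rinv_0_lt_compat; auto.
    + apply Rmult_lt_compat_l; auto.
  - intros [delta [tau1 [Hd [Ht1 H]]]].
    assert (far : forall M, exists t2, in_dom tmin tmax t2 /\ t2 <= tau1 /\
       forall tau, in_dom tmin tmax tau -> tau <= t2 -> M <= x 0%nat - xi tau 0%nat).
    { intros M. destruct (unbounded tmin tmax xi W tau1 Ht1 (x 0%nat - M)) as [t2 [Hd2 [Hle Hx]]].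
      exists t2. split; auto. split; auto. intros tau Htau Hle2.
      destruct (Rle_lt_or_eq_dec tau t2 Hle2) as [Hl| ->].
      - pose proof (incr0 tmin tmax xi W tau t2 Htau Hd2 Hl). lra.
      - lra. }
    assert (key : forall y : event, exists t3, in_dom tmin tmax t3 /\
       forall tau, in_dom tmin tmax tau -> tau <= t3 -> chron_past (xi tau) y /\
         (y 0%nat - xi tau 0%nat) / Dist y (xi tau) < 2 * Rabs (y 0%nat - x 0%nat) + 2 * delta + 1).
    { intros y. set (w := evsub y x).
      set (R0 := 4 * (Rabs (w 0%nat) + Rabs (w 1%nat) + Rabs (w 2%nat) + Rabs (w 3%nat)) * delta
        + 2 * Rabs (mink w w) + 2 + Rabs (w 0%nat)).
      destruct (far (delta * R0)) as [t2 [Hd2 [Hle2 Hf]]].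
      destruct (exists_below tmin t2 (proj1 Hd2)) as [t3 [Ht3 Ht32]].
      assert (Hd3 : in_dom tmin tmax t3) by (apply (dom_of tmin tmax xi W t2); auto; lra).
      exists t3. split; auto. intros tau Htau Hle.
      destruct (H tau Htau ltac:(lra)) as [[Hm H0] Hr].
      pose proof (Hf tau Htau ltac:(lra)) as HM.
      unfold Dist in Hr. change (x 0%nat - xi tau 0%nat) with (evsub x (xi tau) 0%nat) in Hr, HM.
      set (u := evsub x (xi tau)) in *.
      assert (HD : 0 < sqrt (- mink u u)) by (apply sqrt_lt_R0; lra).
      assert (Hud : u 0%nat < delta * sqrt (- mink u u)).
      { apply (Rmult_lt_compat_r (sqrt (- mink u u))) in Hr; auto. unfold Rdiv in Hr.
        rewrite Rmult_assoc, Rinv_l in Hr by lra. lra. }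
      assert (HR : R0 <= sqrt (- mink u u)).
      { left. apply (Rmult_lt_reg_l delta); auto. lra. }
      destruct (core u w delta Hd Hm H0 Hr HR) as [C1 [C2 C3]].
      assert (Ez : evsub y (xi tau) = (fun a => u a + w a)).
      { apply functional_extensionality; intros a. unfold u, w, evsub. ring. }
      unfold chron_past, Dist. rewrite Ez.
      change (y 0%nat - xi tau 0%nat) with (evsub y (xi tau) 0%nat). rewrite Ez.
      split; [split; auto|]. exact C3. }
    split.
    + intros y. destruct (key y) as [t3 [Hd3 Hk]].
      destruct (Hk t3 Hd3 (Rle_refl _)) as [[Hm H0] _].
      exists t3. split; auto.
      exists (fun s a => xi t3 a + s * (y a - xi t3 a)).
      assert (Hv : forall s a, vel (fun s a => xi t3 a + s * (y a - xi t3 a)) s a = evsub y (xi t3) a).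
      { intros s a. unfold vel, Defs.comp. apply is_derive_unique. unfold evsub.
        auto_derive; auto. ring. }
      split; [|split; [|split]].
      * intros a _. ring.
      * intros a _. ring.
      * intros a s _ _. unfold Defs.comp. auto_derive. auto.
      * intros s _. unfold timelike_future, mink. rewrite !Hv. split; auto.
    + intros y. destruct (key y) as [t3 [Hd3 Hk]].
      exists (2 * Rabs (y 0%nat - x 0%nat) + 2 * delta + 1), t3.
      split; [pose proof (Rabs_pos (y 0%nat - x 0%nat)); lra|]. split; auto.
      intros tau Htau Hlt. apply Hk; auto; lra.
Qed.
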